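(* For all positive integers $m,n$, $$\sum_{\substack{w\in W_n\\ |w|\in[m]^n}}t^{\mathrm{bars}(w)}=\sum_{k=0}^{n-1}\binom{n-1}{k}t^k\sum_{u\in[m]^{n-k}}t^{\mathrm{des}(u)}.$$
   Context: A barred word of length $n$ over $\mathbb P$ is a word $w_1\cdots w_n$ of positive integers in which some letters carry a bar; $|w_i|$ is the letter without its bar, $|w|=|w_1|\cdots|w_n|$, and $\mathrm{bars}(w)$ is the number of barred letters. $W_n$ (banners) is the set of barred words of length $n$ such that (1) $w_n$ is unbarred, (2) for $i\in[n-1]$, if $|w_i|<|w_{i+1}|$ then $w_i$ is unbarred, (3) for $i\in[n-1]$, if $|w_i|>|w_{i+1}|$ then $w_i$ is barred. For a word $u$, $\mathrm{des}(u)=|\{i:u_i>u_{i+1}\}|$. $[m]=\{1,\dots,m\}$. *)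

(* Defs.v *)
From HB Require Import structures.
From mathcomp Require Import all_boot all_order all_algebra.
Set Implicit Arguments. Unset Strict Implicit. Unset Printing Implicit Defensive.
Import Order.TTheory GRing.Theory Num.Theory.

(* A barred word of length n with letters in [m] is encoded as a finite
   function w : 'I_n -> 'I_m * bool.  Position i (0-based) carries the letter
   |w_{i+1}| = val (w i).1 + 1 in [m] = {1,..,m}, and (w i).2 = true iff that
   letter is barred. *)
Definition bword (n m : nat) := {ffun 'I_n -> 'I_m * bool}.

Definition bw_letters n m (w : bword n m) : seq nat :=
  [seq (val (w i).1).+1 | i <- enum 'I_n].

Definition bw_bars n m (w : bword n m) : seq bool :=
  [seq (w i).2 | i <- enum 'I_n].

Definition bars n m (w : bword n m) : nat := count id (bw_bars w).

(* w is a banner (w in W_n):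
   (1) w_n unbarred; (2) |w_i| < |w_{i+1}| -> w_i unbarred;
   (3) |w_i| > |w_{i+1}| -> w_i barred   (0-based indices i < n-1 below). *)
Definition is_banner n m (w : bword n m) : bool :=
  let a := bw_letters w in
  let b := bw_bars w in
  [&& ~~ last false b,
      all (fun i => (nth 0 a i < nth 0 a i.+1) ==> ~~ nth false b i) (iota 0 n.-1)
    & all (fun i => (nth 0 a i.+1 < nth 0 a i) ==> nth false b i) (iota 0 n.-1)].

Definition word_letters k m (u : {ffun 'I_k -> 'I_m}) : seq nat :=
  [seq (val (u i)).+1 | i <- enum 'I_k].

Definition des k m (u : {ffun 'I_k -> 'I_m}) : nat :=
  let a := word_letters u in
  count (fun i => nth 0 a i.+1 < nth 0 a i) (iota 0 k.-1).

(* Main.v *)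
Require Import Defs.
From HB Require Import structures.
From mathcomp Require Import all_boot all_order all_algebra.
From mathcomp Require Import ring.
Import GRing.Theory.
Set Implicit Arguments. Unset Strict Implicit. Unset Printing Implicit Defensive.
Local Open Scope ring_scope.

Definition vals (T : finType) n (w : {ffun 'I_n -> T}) : seq T :=
  [seq w i | i <- enum 'I_n].

Definition Ssum (T : finType) n (F : seq T -> {poly int}) :=
  \sum_(w : {ffun 'I_n -> T}) F (vals w).

Lemma Ssum0 (T : finType) (F : seq T -> {poly int}) : Ssum 0 F = F [::].
Proof.
rewrite /Ssum.
rewrite (eq_bigr (fun _ => F [::])); last by move=> w _; rewrite /vals enum_ord0.
by rewrite sumr_const card_ffun card_ord expn0.
Qed.

Lemma sum_pair (A B : finType) (F : A * B -> {poly int}) :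
  \sum_(y : A * B) F y = \sum_(a : A) \sum_(b : B) F (a, b).
Proof. by rewrite pair_bigA; apply eq_bigr => -[a b]. Qed.

Lemma SsumS (T : finType) n (F : seq T -> {poly int}) :
  Ssum n.+1 F = \sum_(x : T) Ssum n (fun s => F (x :: s)).
Proof.
rewrite /Ssum.
pose h (p : T * {ffun 'I_n -> T}) : {ffun 'I_n.+1 -> T} :=
  [ffun i => if unlift ord0 i is Some j then p.2 j else p.1].
pose g (w : {ffun 'I_n.+1 -> T}) := (w ord0, [ffun j => w (lift ord0 j)]).
have hK : cancel h g.
  move=> [x f]; rewrite /g /h /= ffunE unlift_none; congr (_, _).
  by apply/ffunP => j; rewrite !ffunE liftK.
have gK : cancel g h.
  move=> w; apply/ffunP => i; rewrite /g /h ffunE /=.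
  by case: unliftP => [j ->|->]; rewrite ?ffunE.
rewrite (reindex h); last by exists g => ? _; [apply: hK | apply: gK].
rewrite sum_pair; apply eq_bigr => x _; apply eq_bigr => f _.
congr F.
rewrite /vals enum_ordSl /= ffunE unlift_none; congr (_ :: _).
rewrite -map_comp; apply eq_map => j /=.
by rewrite ffunE liftK.
Qed.

Definition cond m (x y : 'I_m * bool) : bool :=
  ((x.1 < y.1)%N ==> ~~ x.2) && ((y.1 < x.1)%N ==> x.2).

Fixpoint ban m (s : seq ('I_m * bool)) : bool :=
  match s with
  | [::] => true
  | x :: s' => match s' with [::] => ~~ x.2 | y :: _ => cond x y && ban s' end
  end.

Definition bannerP m (s : seq ('I_m * bool)) : bool :=
  let a := [seq (val p.1).+1 | p <- s] in
  let b := [seq p.2 | p <- s] in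
  [&& ~~ last false b,
      all (fun i => (nth 0 a i < nth 0 a i.+1) ==> ~~ nth false b i) (iota 0 (size s).-1)
    & all (fun i => (nth 0 a i.+1 < nth 0 a i) ==> nth false b i) (iota 0 (size s).-1)]%N.

Lemma iota1 k : iota 1 k = map succn (iota 0 k).
Proof. by rewrite (iotaDl 1 0). Qed.

Lemma bannerP_ban m (s : seq ('I_m * bool)) : bannerP s = ban s.
Proof.
elim: s => [|x s IH] //; case: s IH => [|y s] IH; first by rewrite /bannerP /= andbT.
rewrite -[ban _]/(cond x y && ban (y :: s)) -IH /bannerP /= iota1 !all_map /=.
rewrite /cond !ltnS.
by case: (x.1 < y.1)%N; case: (y.1 < x.1)%N; case: x.2;
   rewrite /= ?andbF ?andbT.
Qed.

Lemma is_bannerE n m (w : bword n m) : is_banner w = bannerP (vals w).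
Proof.
by rewrite /is_banner /bannerP /bw_letters /bw_bars /vals size_map size_enum_ord -!map_comp.
Qed.

Lemma barsE n m (w : bword n m) : bars w = count snd (vals w).
Proof. by rewrite /bars /bw_bars /vals !count_map. Qed.

Definition desP m (s : seq 'I_m) : nat :=
  let a := [seq (val x).+1 | x <- s] in
  count (fun i => nth 0 a i.+1 < nth 0 a i)%N (iota 0 (size s).-1).

Lemma desE k m (u : {ffun 'I_k -> 'I_m}) : des u = desP (vals u).
Proof. by rewrite /des /desP /word_letters /vals size_map size_enum_ord -!map_comp. Qed.

Lemma desP_cons2 m (x y : 'I_m) s : desP [:: x, y & s] = ((y < x)%N + desP (y :: s))%N.
Proof. by rewrite /desP /= iota1 count_map ltnS. Qed.

Definition LB' m k (x : 'I_m * bool) : {poly int} :=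
  Ssum k (fun s => if ban (x :: s) then 'X ^+ (count snd (x :: s)) else 0).

Lemma LB'0 m (x : 'I_m * bool) : LB' 0 x = if x.2 then 0 else 1.
Proof. by rewrite /LB' Ssum0 /=; case: x.2. Qed.

Lemma LB'S m k (x : 'I_m * bool) :
  LB' k.+1 x = \sum_y (if cond x y then 'X ^+ x.2 * LB' k y else 0).
Proof.
rewrite /LB' SsumS; apply eq_bigr => y _.
rewrite /Ssum; case C: (cond x y).
  rewrite mulr_sumr; apply eq_bigr => w _.
  have -> : ban [:: x, y & vals w] = cond x y && ban (y :: vals w) by [].
  rewrite C andTb; case: (ban (y :: vals w)); rewrite ?mulr0 //.
  have -> : count snd [:: x, y & vals w] = (x.2 + count snd (y :: vals w))%N by [].
  by rewrite exprD.
rewrite big1 // => w _.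
have -> : ban [:: x, y & vals w] = cond x y && ban (y :: vals w) by [].
by rewrite C.
Qed.

Definition LBc m k (c : 'I_m) := LB' k (c, false) + LB' k (c, true).

Definition wD m (c y : 'I_m) : {poly int} := 'X ^+ (y < c)%N.

Lemma LBc0 m (c : 'I_m) : LBc 0 c = 1.
Proof. by rewrite /LBc !LB'0 /= addr0. Qed.

Lemma LBcS m k (c : 'I_m) :
  LBc k.+1 c = \sum_y (wD c y + 'X * (y == c)%:R) * LBc k y.
Proof.
rewrite /LBc !LB'S -big_split sum_pair /=; apply eq_bigr => y _.
rewrite big_bool /= /cond /wD /=.
have -> : (y == c) = (val y == val c) by [].
case: ltngtP => _ /=; rewrite ?expr0 ?expr1 ?mul1r ?mulr0 ?mulr1 ?addr0 ?add0r; ring.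
Qed.

Definition Dp m k (c : 'I_m) : {poly int} := Ssum k (fun s => 'X ^+ (desP (c :: s))).

Lemma Dp0 m (c : 'I_m) : Dp 0 c = 1.
Proof. by rewrite /Dp Ssum0. Qed.

Lemma DpS m k (c : 'I_m) : Dp k.+1 c = \sum_y wD c y * Dp k y.
Proof.
rewrite /Dp SsumS; apply eq_bigr => y _.
rewrite /Ssum mulr_sumr; apply eq_bigr => w _.
by rewrite desP_cons2 exprD.
Qed.

Lemma LBc_D m k (c : 'I_m) :
  LBc k c = \sum_(j < k.+1) 'C(k, j)%:R * 'X ^+ j * Dp (k - j) c.
Proof.
elim: k c => [|k IH] c.
  by rewrite LBc0 big_ord1 /= Dp0 expr0 !mulr1.
rewrite LBcS.
have step : \sum_y (wD c y + 'X * (y == c)%:R) * LBc k y =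
   \sum_(j < k.+1) 'C(k, j)%:R * 'X ^+ j * Dp (k - j).+1 c + 'X * LBc k c.
  rewrite (eq_bigr (fun y => wD c y * LBc k y + 'X * ((y == c)%:R * LBc k y)));
    last by move=> y _; rewrite mulrDl mulrA.
  rewrite big_split /= -mulr_sumr [X in _ + 'X * X](bigD1 c) //= eqxx mul1r
    [X in _ + 'X * (_ + X)]big1 ?addr0; last by move=> y /negbTE ->; rewrite mul0r.
  congr (_ + _).
  under eq_bigr do rewrite IH mulr_sumr.
  rewrite exchange_big /=; apply eq_bigr => j _.
  rewrite DpS mulr_sumr; apply eq_bigr => y _; ring.
rewrite step IH.
have b0 : forall i, bump 0 i = i.+1 by [].
rewrite [in RHS]big_ord_recl /= subn0 expr0.
under [in RHS]eq_bigr do rewrite b0 binS natrD subSS !mulrDl.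
rewrite big_split /=.
rewrite [in LHS]big_ord_recl /= subn0 expr0.
rewrite [X in _ = _ + (X + _)]big_ord_recr /=.
have Z : 'C(k, k.+1)%:R = 0 :> {poly int} by rewrite bin_small.
rewrite Z !mul0r addr0.
rewrite !bin0 -!addrA; congr (_ + _).
rewrite mulr_sumr; congr (_ + _).
  by apply eq_bigr => i _; rewrite b0 subnSK.
by apply eq_bigr => i _; rewrite exprS; ring.
Qed.

Theorem mainTheorem17 (m n : nat) (hm : (0 < m)%N) (hn : (0 < n)%N) :
  (\sum_(w : bword n m | is_banner w) 'X ^+ (bars w) : {poly int})
  = \sum_(k < n) ('C(n.-1, k))%:R * 'X ^+ k *
        \sum_(u : {ffun 'I_(n - k) -> 'I_m}) 'X ^+ (des u).
Proof.
case: n hn => // n _ /=.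
rewrite big_mkcond /=.
have -> : \sum_(w : bword n.+1 m) (if is_banner w then 'X ^+ bars w else 0) =
    Ssum n.+1 (fun s : seq ('I_m * bool) => if ban s then 'X ^+ (count snd s) else 0).
  by rewrite /Ssum; apply eq_bigr => w _; rewrite is_bannerE bannerP_ban barsE.
rewrite SsumS sum_pair.
rewrite (eq_bigr (fun c => LBc n c)); last first.
  by move=> c _; rewrite big_bool /= /LBc addrC.
under eq_bigr do rewrite LBc_D.
rewrite exchange_big /=; apply eq_bigr => j _.
have -> : \sum_(u : {ffun 'I_(n.+1 - j) -> 'I_m}) 'X ^+ (des u) =
    Ssum (n.+1 - j) (fun s : seq 'I_m => 'X ^+ (desP s)).
  by rewrite /Ssum; apply eq_bigr => u _; rewrite desE.
rewrite subSn; last by rewrite -ltnS.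
rewrite SsumS mulr_sumr; apply eq_bigr => c _.
by [].
Qed.
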